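(* Let $w$ be a non-degenerate 4-web on an open subset of $\mathbb{R}^3$ formed by three foliations by surfaces and one foliation by curves. Then the rank of $w$ is at most $2$.
   Context: For a web $w$ formed by foliations $\mathcal{F}_1,\dots,\mathcal{F}_d$ (leaves may have different dimensions), an abelian relation is a $d$-tuple of 1-forms $(\sigma_1,\dots,\sigma_d)$ such that each $\sigma_i$ vanishes on the leaves of $\mathcal{F}_i$, each $\sigma_i$ is closed, and $\sigma_1+\dots+\sigma_d=0$; the rank of $w$ is the dimension of the real vector space of abelian relations. Non-degenerate means: the tangent planes of the three surface foliations are in general position at each point (their conormal covectors form a basis of the cotangent space), and the tangent line of the curve foliation is, at each point, not contained in the tangent plane of any of the three surface foliations. The statement is local. *)

(* Defs.v *)
From HB Require Import structures.
From mathcomp Require Import all_boot all_order all_algebra.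
From mathcomp Require Import all_classical all_reals all_analysis.
Set Implicit Arguments. Unset Strict Implicit. Unset Printing Implicit Defensive.
Import Order.TTheory GRing.Theory Num.Theory.
Import numFieldNormedType.Exports.
Local Open Scope classical_set_scope.
Local Open Scope ring_scope.

(* A 1-form / covector
   field on R^3 is a map 'rV_3 -> 'rV_3 giving its components in dx_0,dx_1,dx_2;
   a vector field is likewise a map 'rV_3 -> 'rV_3. *)

Section Webs.
Variable R : realType.
Notation V := 'rV[R]_3.

Definition cov_pairing (a v : V) : R := \sum_(j < 3) a 0 j * v 0 j.

Definition partial_coord (i : 'I_3) (f : V -> R) : V -> R :=
  fun x => 'D_(delta_mx 0 i) f x.

(* C^k on U (functions are defined on all of R^3, conditions only on U) *)
Fixpoint Ck_on (U : set V) (k : nat) (f : V -> R) : Prop :=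
  match k with
  | 0 => forall x, U x -> {for x, continuous f}
  | k'.+1 => (forall x, U x -> differentiable f x) /\
             (forall i : 'I_3, Ck_on U k' (partial_coord i f))
  end.

Definition smooth_on (U : set V) (f : V -> R) : Prop := forall k, Ck_on U k f.

Definition smooth_field (U : set V) (w : V -> V) : Prop :=
  forall j : 'I_3, smooth_on U (fun x => w x 0 j).

Definition closed_form (U : set V) (w : V -> V) : Prop :=
  forall x, U x -> forall i j : 'I_3,
    partial_coord i (fun y => w y 0 j) x = partial_coord j (fun y => w y 0 i) x.

(* Frobenius integrability of the plane field ker w : w /\ dw = 0 *)
Definition frobenius_integrable (U : set V) (w : V -> V) : Prop :=
  forall x, U x ->
    let c := fun j : 'I_3 => w x 0 j in
    let d := fun i j : 'I_3 => partial_coord i (fun y => w y 0 j) x in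
    c 0 * (d 1 2 - d 2 1) + c 1 * (d 2 0 - d 0 2) + c 2 * (d 0 1 - d 1 0) = 0.

(* A foliation by surfaces on U, given by a smooth nowhere-vanishing conormal
   field w (tangent planes = ker w) satisfying the Frobenius condition. *)
Definition surface_foliation (U : set V) (w : V -> V) : Prop :=
  [/\ smooth_field U w, (forall x, U x -> w x != 0) & frobenius_integrable U w].

(* A foliation by curves on U, given by a smooth nowhere-vanishing vector field X
   (tangent lines = span X). *)
Definition curve_foliation (U : set V) (X : V -> V) : Prop :=
  smooth_field U X /\ (forall x, U x -> X x != 0).

Definition web_nondegenerate (U : set V) (w : 'I_3 -> V -> V) (X : V -> V) : Prop :=
  forall x, U x ->
    row_free (\matrix_(i < 3, j < 3) w i x 0 j) /\
    (forall i : 'I_3, cov_pairing (w i x) (X x) != 0).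

Definition is_3surf1curve_web (U : set V) (w : 'I_3 -> V -> V) (X : V -> V) : Prop :=
  (forall i, surface_foliation U (w i)) /\ curve_foliation U X.

Definition abelian_relation (U : set V) (w : 'I_3 -> V -> V) (X : V -> V)
    (sigma : 'I_4 -> V -> V) : Prop :=
  [/\ forall k, smooth_field U (sigma k),
      forall k, closed_form U (sigma k),
      forall (i : 'I_3) x v, U x -> cov_pairing (w i x) v = 0 ->
          cov_pairing (sigma (widen_ord (leqnSn 3) i) x) v = 0,
      forall x, U x -> cov_pairing (sigma ord_max x) (X x) = 0
    & forall x, U x -> \sum_(k < 4) sigma k x = 0].

Definition web_rank_le (U : set V) (w : 'I_3 -> V -> V) (X : V -> V) (n : nat) : Prop :=
  forall s : 'I_n.+1 -> 'I_4 -> V -> V,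
    (forall m, abelian_relation U w X (s m)) ->
    exists c : 'I_n.+1 -> R, (exists m, c m != 0) /\
      forall k x, U x -> \sum_(m < n.+1) c m *: s m k x = 0.

End Webs.

(* Main.v *)
Require Import Defs.
From HB Require Import structures.
From mathcomp Require Import all_boot all_order all_algebra.
From mathcomp Require Import all_classical all_reals all_analysis.
Import numFieldNormedType.Exports.
From mathcomp Require Import ring lra.
Set Implicit Arguments. Unset Strict Implicit. Unset Printing Implicit Defensive.
Import Order.TTheory GRing.Theory Num.Theory.
Local Open Scope classical_set_scope.
Local Open Scope ring_scope.

Section U.
Variable R : realType.
Notation V := 'rV[R]_3.

Definition o0 : 'I_3 := @Ordinal 3 0 isT.
Definition o1 : 'I_3 := @Ordinal 3 1 isT.
Definition o2 : 'I_3 := @Ordinal 3 2 isT.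

Lemma sum3 (M : nmodType) (F : 'I_3 -> M) : \sum_(i < 3) F i = F o0 + F o1 + F o2.
Proof.
rewrite !big_ord_recr big_ord0 /= add0r.
by congr (F _ + F _ + F _); apply: val_inj.
Qed.

Lemma cp_delta (a : V) b : cov_pairing a (delta_mx 0 b) = a 0 b.
Proof.
rewrite /cov_pairing (bigD1 b) //= mxE !eqxx mulr1 big1 ?addr0 // => j /negPf jb.
by rewrite mxE jb andbF mulr0.
Qed.

Lemma cp_lin (a u v : V) (k1 k2 : R) :
  cov_pairing a (k1 *: u - k2 *: v) = k1 * cov_pairing a u - k2 * cov_pairing a v.
Proof. by rewrite /cov_pairing !sum3 !mxE; ring. Qed.

Lemma cp_addl (a b u : V) : cov_pairing (a + b) u = cov_pairing a u + cov_pairing b u.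
Proof. by rewrite /cov_pairing !sum3 !mxE; ring. Qed.

Lemma cp_sum (I : Type) (r : seq I) (F : I -> V) u :
  cov_pairing (\sum_(i <- r) F i) u = \sum_(i <- r) cov_pairing (F i) u.
Proof.
elim: r => [|x r ih]; first by rewrite !big_nil /cov_pairing big1 // => j _; rewrite mxE mul0r.
by rewrite !big_cons cp_addl ih.
Qed.

Lemma cp_scale (a u : V) (k : R) : cov_pairing (k *: a) u = k * cov_pairing a u.
Proof. by rewrite /cov_pairing !sum3 !mxE; ring. Qed.

Lemma cp_zero u : cov_pairing (0 : V) u = 0.
Proof. by rewrite /cov_pairing big1 // => j _; rewrite mxE mul0r. Qed.

Lemma diffM' (f g : V -> R) x : differentiable f x -> differentiable g x ->
  differentiable (fun z => f z * g z) x.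
Proof. by move=> hf hg; have := differentiableM hf hg. Qed.

Lemma diff_sum' n (F : 'I_n -> V -> R) x : (forall i, differentiable (F i) x) ->
  differentiable (fun z => \sum_(i < n) F i z) x.
Proof. by move=> h; have := differentiable_sum h; rewrite fct_sumE. Qed.

Lemma deriveM' (f g : V -> R) x v : differentiable f x -> differentiable g x ->
  'D_v (fun z => f z * g z) x = f x * 'D_v g x + g x * 'D_v f x.
Proof.
move=> hf hg.
have dfv : derivable f x v by exact: diff_derivable.
have dgv : derivable g x v by exact: diff_derivable.
by have := deriveM dfv dgv; move=> ->.
Qed.

Lemma derive_sum' n (F : 'I_n -> V -> R) x v : (forall i, differentiable (F i) x) ->
  'D_v (fun z => \sum_(i < n) F i z) x = \sum_(i < n) 'D_v (F i) x.
Proof.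
move=> h; rewrite -fct_sumE derive_sum //.
by move=> i; exact: diff_derivable.
Qed.

Lemma derive_lin (f : V -> R) x v : differentiable f x ->
  'D_v f x = \sum_(a < 3) v 0 a * partial_coord a f x.
Proof.
move=> hf; rewrite deriveE // {1}(row_sum_delta v) linear_sum.
apply: eq_bigr => a _; rewrite linearZ /partial_coord deriveE //.
Qed.

End U.

Section P1.
Variable R : realType.
Notation V := 'rV[R]_3.

Definition cont (x0 : V) (f : V -> R) := f x @[x --> x0] --> f x0.

Lemma cont_cst x0 (c : R) : cont x0 (fun _ => c).
Proof. by rewrite /cont; exact: (@cvg_cst _ c V (nbhs x0) _). Qed.

Lemma cont_add x0 f g : cont x0 f -> cont x0 g -> cont x0 (fun x => f x + g x).
Proof. by move=> hf hg; rewrite /cont; apply: (cvgD hf hg). Qed.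

Lemma cont_opp x0 f : cont x0 f -> cont x0 (fun x => - f x).
Proof. by move=> hf; rewrite /cont; apply: (cvgN hf). Qed.

Lemma cont_mul x0 f g : cont x0 f -> cont x0 g -> cont x0 (fun x => f x * g x).
Proof. by move=> hf hg; rewrite /cont; apply: (cvgM hf hg). Qed.

Lemma cont_inv x0 f : cont x0 f -> f x0 != 0 -> cont x0 (fun x => (f x)^-1).
Proof. by move=> hf h; rewrite /cont; apply: (cvgV h hf). Qed.

Lemma cont_norm x0 f : cont x0 f -> cont x0 (fun x => `|f x|).
Proof. by move=> hf; rewrite /cont; apply: (cvg_norm hf). Qed.

Lemma cont_sum x0 (I : Type) (s : seq I) (P : pred I) (F : I -> V -> R) :
  (forall i, P i -> cont x0 (F i)) -> cont x0 (fun x => \sum_(i <- s | P i) F i x).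
Proof.
move=> h; elim: s => [|a s ih].
  by under eq_fun do rewrite big_nil; exact: cont_cst.
under eq_fun do rewrite big_cons.
case: (boolP (P a)) => Pa.
  by apply: cont_add => //; exact: h.
exact: ih.
Qed.

Lemma cont_prod x0 (I : Type) (s : seq I) (P : pred I) (F : I -> V -> R) :
  (forall i, P i -> cont x0 (F i)) -> cont x0 (fun x => \prod_(i <- s | P i) F i x).
Proof.
move=> h; elim: s => [|a s ih].
  by under eq_fun do rewrite big_nil; exact: cont_cst.
under eq_fun do rewrite big_cons.
case: (boolP (P a)) => Pa.
  by apply: cont_mul => //; exact: h.
exact: ih.
Qed.

Lemma cont_det x0 n (M : V -> 'M[R]_n) :
  (forall i j, cont x0 (fun x => M x i j)) -> cont x0 (fun x => \det (M x)).
Proof.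
move=> h; rewrite /cont; under eq_fun do rewrite /determinant.
apply: cont_sum => s _; apply: cont_mul; first exact: cont_cst.
by apply: cont_prod => i _; exact: h.
Qed.

Lemma cont_adj x0 n (M : V -> 'M[R]_n) :
  (forall i j, cont x0 (fun x => M x i j)) -> forall i j, cont x0 (fun x => \adj (M x) i j).
Proof.
move=> h i j; under eq_fun do rewrite mxE /cofactor.
apply: cont_mul; first exact: cont_cst.
by apply: cont_det => a b; under eq_fun do rewrite !mxE; exact: h.
Qed.

End P1.

Section P2.
Variable R : realType.
Notation V := 'rV[R]_3.

Lemma seg_derive (phi : V -> R) (p v : V) (t0 : R) :
  derivable phi (p + t0 *: v) v ->
  is_derive t0 1 (fun t : R => phi (p + t *: v)) ('D_v phi (p + t0 *: v)).
Proof.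
move=> dphi.
have E : (fun h : R => h^-1 *: (((fun t : R => phi (p + t *: v)) \o shift t0) (h *: 1)
            - phi (p + t0 *: v))) =
         (fun h : R => h^-1 *: ((phi \o shift (p + t0 *: v)) (h *: v) - phi (p + t0 *: v))).
  apply/funext => h /=; congr (_ *: (phi _ - _)).
  by rewrite /shift /= [h *: (1:R)]/GRing.scale /= mulr1 scalerDl addrCA addrA.
split.
  by rewrite /derivable E.
by rewrite /derive E.
Qed.

Lemma gronwall (g dg : R -> R) (K : R) :
  (forall t : R, t \in `]0, 1[%R -> is_derive t 1 g (dg t)) ->
  {within `[0, 1], continuous g} ->
  (forall t : R, t \in `]0, 1[%R -> dg t <= K * g t) ->
  g 0 = 0 -> (forall t : R, t \in `[0, 1]%R -> 0 <= g t) -> g 1 = 0.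
Proof.
move=> hd hc hle g0 gpos.
pose e := fun t : R => expR (- K * t).
pose h := fun t : R => g t * e t.
have de (t : R) : is_derive t 1 e (expR (- K * t) * (- K)).
  rewrite /e; have -> : (fun t => expR (- K * t)) = expR \o (fun t => - K * t) by [].
  apply: is_derive1_comp.
  have -> : (fun t : R => - K * t) = ((cst (- K)) * id) by [].
  apply: (is_derive_eq (is_deriveM (is_derive_cst (-K) t 1) (is_derive_id t 1))).
  by rewrite /cst /GRing.scale /= mulr1 mulr0 addr0.
have hdh (t : R) : t \in `]0, 1[%R -> is_derive t 1 h (g t * (expR (- K * t) * (- K)) + e t * dg t).
  move=> tin; have := hd _ tin => dgt.
  have -> : h = g * e by [].
  apply: (is_derive_eq (is_deriveM dgt (de t))).
  by rewrite /GRing.scale /= mulrC.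
have hcont : {within `[0, 1], continuous h}.
  move=> x; apply: continuousM; first exact: hc.
  apply: (@continuous_subspaceT _ _ _ e) => y.
  rewrite /e; apply: continuous_comp; last exact: continuous_expR.
  by apply: continuousM; [exact: cvg_cst | exact: cvg_id].
have [c cin hc1] := MVT (ltr01 : (0:R) < 1) hdh hcont.
have h0 : h 0 = 0 by rewrite /h g0 mul0r.
have hle1 : h 1 <= 0.
  have -> : h 1 = h 1 - h 0 by rewrite h0 subr0.
  rewrite hc1 subr0 mulr1.
  have := hle _ cin; rewrite /e.
  set E := expR (- K * c).
  have Ep : 0 < E by exact: expR_gt0.
  move=> hh.
  have -> : g c * (E * - K) + E * dg c = E * (dg c - K * g c) by ring.
  by apply: mulr_ge0_le0; [exact: ltW | rewrite subr_le0].
have g1 : 0 <= g 1 by apply: gpos; rewrite in_itv /= lexx ler01.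
apply/eqP; rewrite eq_le g1 andbT.
by move: hle1; rewrite /h pmulr_lle0 // expR_gt0.
Qed.
End P2.

Section P3.
Variable R : realType.

Lemma ord3P (P : 'I_3 -> Prop) : P o0 -> P o1 -> P o2 -> forall i, P i.
Proof.
move=> h0 h1 h2 [[|[|[|m]]] hm] //.
- by rewrite (_ : Ordinal hm = o0) //; apply: val_inj.
- by rewrite (_ : Ordinal hm = o1) //; apply: val_inj.
- by rewrite (_ : Ordinal hm = o2) //; apply: val_inj.
Qed.

Lemma sum_delta (F : 'I_3 -> R) (a : 'I_3) :
  \sum_(c < 3) F c * (c == a)%:R = F a.
Proof.
rewrite (bigD1 a) //= eqxx mulr1 big1 ?addr0 // => c /negPf ->.
by rewrite mulr0.
Qed.

Lemma sum_deltaL (F : 'I_3 -> R) (a : 'I_3) :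
  \sum_(c < 3) (if c == a then F c else 0) = F a.
Proof.
rewrite (bigD1 a) //= eqxx big1 ?addr0 // => c /negPf ->. by [].
Qed.

Section Alg.
Variables (n e : 'I_3 -> 'I_3 -> R) (A : 'I_3 -> R) (dA : 'I_3 -> 'I_3 -> R)
  (dN : 'I_3 -> 'I_3 -> 'I_3 -> R).

Definition Tc i j := \sum_(a < 3) \sum_(b < 3) e j a * e i b * (dN i b a - dN i a b).
Definition DAc k i := \sum_(a < 3) e i a * dA k a.
Definition Qc i j k :=
  if j == i then - ((if k == i then 0 else A k * Tc k i) + DAc k i) / A i
  else (if k == i then Tc i j else 0).
Definition Lc i a k := \sum_(j < 3) n j a * Qc i j k.

Lemma alg (G : 'I_3 -> R) (dG : 'I_3 -> 'I_3 -> R) :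
  (forall i j, \sum_(b < 3) n i b * e j b = (i == j)%:R) ->
  (forall c a, \sum_(j < 3) e j c * n j a = (c == a)%:R) ->
  (forall i, A i != 0) ->
  (forall i a b, dG i a * n i b + G i * dN i a b = dG i b * n i a + G i * dN i b a) ->
  (forall a, \sum_(k < 3) (dG k a * A k + G k * dA k a) = 0) ->
  forall i a, dG i a = \sum_(k < 3) Lc i a k * G k.
Proof.
move=> D1 D2 HA Hw Hc.
pose E i j := \sum_(a < 3) dG i a * e j a.
have step0 i a : dG i a = \sum_(j < 3) n j a * E i j.
  have -> : dG i a = \sum_(c < 3) dG i c * \sum_(j < 3) e j c * n j a.
    by under eq_bigr do rewrite D2; rewrite sum_delta.
  rewrite /E !sum3; ring.
have step1 i j : j != i -> E i j = G i * Tc i j.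
  move=> ji.
  have H0 : \sum_(a < 3) \sum_(b < 3) e j a * e i b *
     ((dG i a * n i b + G i * dN i a b) - (dG i b * n i a + G i * dN i b a)) = 0.
    by apply: big1 => a _; apply: big1 => b _; rewrite Hw subrr mulr0.
  have H1 : \sum_(a < 3) \sum_(b < 3) e j a * e i b *
     ((dG i a * n i b + G i * dN i a b) - (dG i b * n i a + G i * dN i b a)) =
     E i j * (\sum_(b < 3) n i b * e i b) - (\sum_(b < 3) n i b * e j b) * E i i
       - G i * Tc i j.
    rewrite /E /Tc !sum3; ring.
  move: H0; rewrite H1 D1 D1 eqxx [i == j]eq_sym (negPf ji) => /eqP.
  by rewrite mulr1 mul0r subr0 subr_eq0 => /eqP.
have step2 i : \sum_(k < 3) (A k * E k i + G k * DAc k i) = 0.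
  have H0 : \sum_(a < 3) e i a * \sum_(k < 3) (dG k a * A k + G k * dA k a) = 0.
    by apply: big1 => a _; rewrite Hc mulr0.
  rewrite -[RHS]H0 /E /DAc !sum3; ring.
have stepE i j : E i j = \sum_(k < 3) Qc i j k * G k.
  rewrite /Qc; case: eqP => [->|/eqP ji]; last first.
    rewrite (bigD1 i) //= eqxx big1 ?addr0; last by move=> k /negPf ->; rewrite mul0r.
    by rewrite step1 // mulrC.
  have h2 := step2 i.
  have HAj := HA i.
  have eqs : \sum_(k < 3) (A k * E k i + G k * DAc k i) =
      A i * E i i + \sum_(k < 3) ((if k == i then 0 else A k * Tc k i) + DAc k i) * G k.
    rewrite [in LHS](bigD1 i) //= [in RHS](bigD1 i) //= eqxx add0r.
    rewrite -addrA; congr (_ + (_ + _)); first by rewrite mulrC.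
    apply: eq_bigr => k kj; have jk : i != k by rewrite eq_sym.
    rewrite (negPf kj) (step1 k i jk); ring.
  rewrite eqs in h2.
  have -> : \sum_(k < 3) - ((if k == i then 0 else A k * Tc k i) + DAc k i) / A i * G k
      = - (\sum_(k < 3) ((if k == i then 0 else A k * Tc k i) + DAc k i) * G k) / A i.
    rewrite mulNr mulr_suml -sumrN; apply: eq_bigr => k _; ring.
  move/eqP: h2; rewrite addr_eq0 => /eqP h3.
  by apply: (mulfI HAj); rewrite h3 mulrCA mulfV // mulr1.
move=> i a; rewrite step0.
under eq_bigr do rewrite stepE.
rewrite /Lc !sum3; ring.
Qed.
End Alg.
End P3.

Section P7.
Variable R : realType.

Lemma term_le_sum (F : 'I_3 -> R) i : (forall j, 0 <= F j) -> F i <= \sum_(j < 3) F j.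
Proof.
move=> h; rewrite (bigD1 i) //= lerDl; apply: sumr_ge0 => j _; exact: h.
Qed.

Lemma absbound (G v : 'I_3 -> R) (L : 'I_3 -> 'I_3 -> 'I_3 -> R) :
  \sum_(i < 3) 2 * G i * (\sum_(a < 3) v a * \sum_(k < 3) L i a k * G k) <=
  (\sum_(a < 3) `|v a|) * (2 * \sum_(i < 3) \sum_(a < 3) \sum_(k < 3) `|L i a k|)
    * (\sum_(i < 3) G i * G i).
Proof.
set W := \sum_(a < 3) `|v a|.
set P := \sum_(i < 3) G i * G i.
have hW a : `|v a| <= W by apply: term_le_sum => j; exact: normr_ge0.
have hP i k : `|G i| * `|G k| <= P.
  have hi : G i * G i <= P by apply: term_le_sum => j; rewrite -expr2 sqr_ge0.
  have hk : G k * G k <= P by apply: term_le_sum => j; rewrite -expr2 sqr_ge0.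
  have ai := normr_ge0 (G i); have ak := normr_ge0 (G k).
  have ei : `|G i| * `|G i| = G i * G i by rewrite -normrM ger0_norm // -expr2 sqr_ge0.
  have ek : `|G k| * `|G k| = G k * G k by rewrite -normrM ger0_norm // -expr2 sqr_ge0.
  nra.
have -> : \sum_(i < 3) 2 * G i * (\sum_(a < 3) v a * \sum_(k < 3) L i a k * G k) =
  \sum_(i < 3) \sum_(a < 3) \sum_(k < 3) (2 * G i * v a * L i a k * G k).
  by rewrite !sum3; ring.
have -> : W * (2 * \sum_(i < 3) \sum_(a < 3) \sum_(k < 3) `|L i a k|) * P =
  \sum_(i < 3) \sum_(a < 3) \sum_(k < 3) (2 * `|L i a k| * (W * P)).
  by rewrite !sum3; ring.
apply: ler_sum => i _; apply: ler_sum => a _; apply: ler_sum => k _.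
apply: le_trans (ler_norm _) _.
rewrite !normrM (ger0_norm (_ : (0:R) <= 2)) //.
have hL := normr_ge0 (L i a k).
have := hW a; have := hP i k.
have := normr_ge0 (v a); have := normr_ge0 (G i); have := normr_ge0 (G k).
move=> h1 h2 h3 h4 h5.
have hWP : `|v a| * (`|G i| * `|G k|) <= W * P.
  apply: ler_pM => //; exact: mulr_ge0.
nra.
Qed.
End P7.

Section Web.
Variable R : realType.
Notation V := 'rV[R]_3.
Variables (U : set V) (w : 'I_3 -> V -> V) (X : V -> V) (tau : 'I_4 -> V -> V).
Hypothesis HU : open U.
Hypothesis Hws : forall i, smooth_field U (w i).
Hypothesis HXs : smooth_field U X.
Hypothesis Hnd : web_nondegenerate U w X.
Definition sg (i : 'I_3) := tau (widen_ord (leqnSn 3) i).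
Hypothesis Hdiff : forall (i : 'I_3) b y, U y -> differentiable (fun z => sg i z 0 b) y.
Hypothesis Hcl : forall i : 'I_3, closed_form U (sg i).
Hypothesis Hann : forall (i : 'I_3) y v, U y -> cov_pairing (w i y) v = 0 ->
  cov_pairing (sg i y) v = 0.
Hypothesis Hsum : forall y, U y -> \sum_(i < 3) cov_pairing (sg i y) (X y) = 0.

Definition Af (i : 'I_3) (y : V) := cov_pairing (w i y) (X y).
Definition Gf (i : 'I_3) (y : V) := cov_pairing (sg i y) (X y) / Af i y.

Lemma Af_neq0 i y : U y -> Af i y != 0.
Proof. by move=> Uy; have [_ h] := Hnd Uy; exact: h. Qed.

Lemma par i y u : U y -> cov_pairing (sg i y) u = Gf i y * cov_pairing (w i y) u.
Proof.
move=> Uy; have Ha := Af_neq0 i Uy.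
have h := @Hann i y (Af i y *: u - cov_pairing (w i y) u *: X y) Uy.
rewrite !cp_lin in h.
have /h /eqP : Af i y * cov_pairing (w i y) u - cov_pairing (w i y) u * cov_pairing (w i y) (X y) = 0.
  by rewrite /Af; ring.
rewrite subr_eq0 => /eqP h2.
rewrite /Gf; apply: (mulfI Ha); rewrite h2; field; exact: Ha.
Qed.

Lemma par_comp i y b : U y -> sg i y 0 b = Gf i y * w i y 0 b.
Proof. by move=> Uy; rewrite -!cp_delta par. Qed.

Lemma w_diff i b y : U y -> differentiable (fun z => w i z 0 b) y.
Proof. by move=> Uy; have [h _] := Hws i b 1%N; exact: h. Qed.

Lemma X_diff b y : U y -> differentiable (fun z => X z 0 b) y.
Proof. by move=> Uy; have [h _] := HXs b 1%N; exact: h. Qed.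

Lemma w_pcont i a b y : U y -> cont y (partial_coord a (fun z => w i z 0 b)).
Proof. by move=> Uy; have [_ h] := Hws i b 1%N; exact: h. Qed.

Lemma X_pcont a b y : U y -> cont y (partial_coord a (fun z => X z 0 b)).
Proof. by move=> Uy; have [_ h] := HXs b 1%N; exact: h. Qed.

Lemma Af_diff i y : U y -> differentiable (Af i) y.
Proof.
move=> Uy; rewrite /Af /cov_pairing; apply: diff_sum' => j.
by apply: diffM'; [exact: w_diff | exact: X_diff].
Qed.

Lemma Gf_diff i y : U y -> differentiable (Gf i) y.
Proof.
move=> Uy; rewrite /Gf; apply: diffM'.
  rewrite /cov_pairing; apply: diff_sum' => j.
  by apply: diffM'; [exact: Hdiff | exact: X_diff].
by apply: differentiableV; [exact: Af_diff | exact: Af_neq0].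
Qed.

Lemma nearU y : U y -> \forall z \near y, U z.
Proof. by move=> Uy; apply: open_nbhs_nbhs. Qed.

Lemma Hprod i a b y : U y ->
  partial_coord a (fun z => sg i z 0 b) y =
  partial_coord a (Gf i) y * w i y 0 b + Gf i y * partial_coord a (fun z => w i z 0 b) y.
Proof.
move=> Uy; rewrite /partial_coord.
have E : 'D_(delta_mx 0 a) (fun z => sg i z 0 b) y =
   'D_(delta_mx 0 a) (fun z => Gf i z * w i z 0 b) y.
  apply: near_eq_derive.
  apply: filterS (nearU Uy) => z Uz.
  exact: par_comp.
rewrite E deriveM'; [|exact: Gf_diff|exact: w_diff].
by rewrite addrC [w i y 0 b * _]mulrC.
Qed.
Definition dAf k a y := \sum_(b < 3) (partial_coord a (fun z => w k z 0 b) y * X y 0 b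
   + w k y 0 b * partial_coord a (fun z => X z 0 b) y).

Lemma dAf_eq k a y : U y -> partial_coord a (Af k) y = dAf k a y.
Proof.
move=> Uy; rewrite /Af /cov_pairing /partial_coord derive_sum'; last first.
  by move=> j; apply: diffM'; [exact: w_diff | exact: X_diff].
apply: eq_bigr => j _; rewrite deriveM'; [|exact: w_diff|exact: X_diff].
by rewrite /partial_coord addrC [X y 0 j * _]mulrC.
Qed.

Lemma Hc a y : U y ->
  \sum_(k < 3) (partial_coord a (Gf k) y * Af k y + Gf k y * dAf k a y) = 0.
Proof.
move=> Uy.
have H0 : partial_coord a (fun z => \sum_(k < 3) Gf k z * Af k z) y = 0.
  rewrite /partial_coord.
  have -> : 'D_(delta_mx 0 a) (fun z => \sum_(k < 3) Gf k z * Af k z) y =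
            'D_(delta_mx 0 a) (cst (0:R)) y.
    apply: near_eq_derive.
    apply: filterS (nearU Uy) => z Uz.
    rewrite /cst /= -[RHS](Hsum Uz); apply: eq_bigr => k _; rewrite /Gf mulfVK //.
    exact: Af_neq0.
  exact: derive_cst.
rewrite -[RHS]H0 /partial_coord derive_sum'; last first.
  by move=> k; apply: diffM'; [exact: Gf_diff | exact: Af_diff].
apply: eq_bigr => k _.
rewrite deriveM'; [|exact: Gf_diff|exact: Af_diff].
have := dAf_eq k a Uy; rewrite /partial_coord => ->.
by rewrite addrC [Af k y * _]mulrC.
Qed.

Definition Mf y := \matrix_(i < 3, j < 3) w i y 0 j.
Definition ee y (j b : 'I_3) := \adj (Mf y) b j / \det (Mf y).

Lemma det_neq0 y : U y -> \det (Mf y) != 0.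
Proof.
move=> Uy; have [h _] := Hnd Uy.
by move: h; rewrite row_free_unit unitmxE unitfE.
Qed.

Lemma D1 y i j : U y -> \sum_(b < 3) w i y 0 b * ee y j b = (i == j)%:R.
Proof.
move=> Uy; have hd := det_neq0 Uy.
have := congr1 (fun M : 'M[R]_3 => M i j) (mul_mx_adj (Mf y)).
rewrite !mxE /= => h.
apply: (mulfI hd); rewrite mulr_sumr.
rewrite mulr_natr -h; apply: eq_bigr => b _.
rewrite /ee mxE [Mf y i b]mxE; field; exact: hd.
Qed.

Lemma D2 y c a : U y -> \sum_(j < 3) ee y j c * w j y 0 a = (c == a)%:R.
Proof.
move=> Uy; have hd := det_neq0 Uy.
have := congr1 (fun M : 'M[R]_3 => M c a) (mul_adj_mx (Mf y)).
rewrite !mxE /= => h.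
apply: (mulfI hd); rewrite mulr_sumr mulr_natr -h; apply: eq_bigr => j _.
rewrite /ee mxE [Mf y j a]mxE; field; exact: hd.
Qed.

Definition Lcy y := Lc (fun i b => w i y 0 b) (ee y) (fun i => Af i y)
  (fun k a => dAf k a y) (fun i a b => partial_coord a (fun z => w i z 0 b) y).

Lemma dG_formula y : U y -> forall i a,
  partial_coord a (Gf i) y = \sum_(k < 3) Lcy y i a k * Gf k y.
Proof.
move=> Uy.
apply: (@alg R (fun i b => w i y 0 b) (ee y) (fun i => Af i y)
  (fun k a => dAf k a y) (fun i a b => partial_coord a (fun z => w i z 0 b) y)
  (fun k => Gf k y) (fun i a => partial_coord a (Gf i) y)).
- by move=> i j; exact: D1.
- by move=> c a; exact: D2.
- by move=> i; exact: Af_neq0.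
- move=> i a b /=; rewrite -!Hprod //.
  by apply: Hcl.
- by move=> a; exact: Hc.
Qed.

Definition phi y := \sum_(i < 3) Gf i y * Gf i y.

Lemma phi_diff y : U y -> differentiable phi y.
Proof.
move=> Uy; apply: diff_sum' => i.
by apply: diffM'; exact: Gf_diff.
Qed.

Lemma phi_ge0 y : 0 <= phi y.
Proof. by apply: sumr_ge0 => i _; rewrite -expr2 sqr_ge0. Qed.

Lemma Dphi y v : U y ->
  'D_v phi y = \sum_(i < 3) 2 * Gf i y *
     (\sum_(a < 3) v 0 a * \sum_(k < 3) Lcy y i a k * Gf k y).
Proof.
move=> Uy; rewrite /phi derive_sum'; last by move=> i; apply: diffM'; exact: Gf_diff.
apply: eq_bigr => i _; rewrite deriveM'; [|exact: Gf_diff|exact: Gf_diff].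
rewrite derive_lin; last exact: Gf_diff.
under eq_bigr do rewrite (dG_formula Uy).
ring.
Qed.

Definition Bf y := 2 * \sum_(i < 3) \sum_(a < 3) \sum_(k < 3) `|Lcy y i a k|.

Lemma w_cont i b x : U x -> cont x (fun z => w i z 0 b).
Proof. by move=> Ux; exact: differentiable_continuous (w_diff i b Ux). Qed.

Lemma X_cont b x : U x -> cont x (fun z => X z 0 b).
Proof. by move=> Ux; exact: differentiable_continuous (X_diff b Ux). Qed.

Lemma Af_cont i x : U x -> cont x (Af i).
Proof. by move=> Ux; exact: differentiable_continuous (Af_diff i Ux). Qed.

Lemma Gf_cont i x : U x -> cont x (Gf i).
Proof. by move=> Ux; exact: differentiable_continuous (Gf_diff i Ux). Qed.

Lemma phi_cont x : U x -> cont x phi.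
Proof. by move=> Ux; exact: differentiable_continuous (phi_diff Ux). Qed.

Lemma ee_cont j b x : U x -> cont x (fun y => ee y j b).
Proof.
move=> Ux; rewrite /ee.
have hM : forall i j, cont x (fun y => Mf y i j).
  by move=> i k; rewrite /Mf; under eq_fun do rewrite mxE; exact: w_cont.
apply: cont_mul; first exact: cont_adj.
by apply: cont_inv; [exact: cont_det | exact: det_neq0].
Qed.

Lemma dAf_cont k a x : U x -> cont x (dAf k a).
Proof.
move=> Ux; rewrite /dAf; apply: cont_sum => b _.
apply: cont_add; apply: cont_mul.
- exact: w_pcont.
- exact: X_cont.
- exact: w_cont.
- exact: X_pcont.
Qed.

Ltac cont_step Ux :=
  lazymatch goal with
  | |- cont _ (fun y => w _ y 0 _) => exact: (@w_cont _ _ _ Ux)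
  | |- cont _ (fun y => X y 0 _) => exact: (@X_cont _ _ _ Ux)
  | |- cont _ (fun y => Af _ y) => exact: (@Af_cont _ _ Ux)
  | |- cont _ (Af _) => exact: (@Af_cont _ _ Ux)
  | |- cont _ (fun y => ee y _ _) => exact: (@ee_cont _ _ _ Ux)
  | |- cont _ (fun y => dAf _ _ y) => exact: (@dAf_cont _ _ _ Ux)
  | |- cont _ (dAf _ _) => exact: (@dAf_cont _ _ _ Ux)
  | |- cont _ (fun y => partial_coord _ (fun z => w _ z 0 _) y) => exact: (@w_pcont _ _ _ _ Ux)
  | |- cont _ (partial_coord _ (fun z => w _ z 0 _)) => exact: (@w_pcont _ _ _ _ Ux)
  | |- cont _ (fun y => partial_coord _ (fun z => X z 0 _) y) => exact: (@X_pcont _ _ _ Ux)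
  | |- cont _ (partial_coord _ (fun z => X z 0 _)) => exact: (@X_pcont _ _ _ Ux)
  | |- Af _ _ != 0 => exact: (@Af_neq0 _ _ Ux)
  | |- cont _ (fun y => \sum_(_ <- _ | _) _) => apply: cont_sum => ? _
  | |- cont _ (fun y => @?f y + @?g y) => apply: cont_add
  | |- cont _ (fun y => - @?f y) => apply: cont_opp
  | |- cont _ (fun y => @?f y * @?g y) => apply: cont_mul
  | |- cont _ (fun y => (@?f y)^-1) => apply: cont_inv
  | |- cont _ (fun y => _) => exact: cont_cst
  end.

Ltac cont_tac Ux := repeat (cont_step Ux).

Lemma Lcy_cont i a k x : U x -> cont x (fun y => Lcy y i a k).
Proof.
move=> Ux; rewrite /Lcy /Lc; apply: cont_sum => j _.
apply: cont_mul; first exact: w_cont.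
rewrite /Qc; case: (j == i); case: (k == i); rewrite /Tc /DAc /=; cont_tac Ux.
all: first [exact: (@Af_neq0 _ _ Ux) | exact: (@w_pcont _ _ _ _ Ux) | exact: (@X_pcont _ _ _ Ux)].
Qed.

Lemma Bf_cont x : U x -> cont x Bf.
Proof.
move=> Ux; rewrite /Bf; apply: cont_mul; first exact: cont_cst.
do 3 (apply: cont_sum => ? _); apply: cont_norm; exact: Lcy_cont.
Qed.

Lemma local x : U x -> phi x = 0 -> \forall y \near x, U y /\ phi y = 0.
Proof.
move=> Ux phix.
have hB := Bf_cont Ux.
have hlt : Bf x < Bf x + 1 by rewrite ltrDl ltr01.
have nb : \forall y \near x, U y /\ Bf y < Bf x + 1.
  near=> y; split.
    near: y; exact: nearU Ux.
  near: y; exact: (cvgr_lt _ hB _ hlt).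
move/nbhs_normP: nb => [r r0 hr].
apply/nbhs_normP; exists r => // y hy.
set v := y - x.
pose p t := x + t *: v.
have Hp (t : R) : t \in `[0, 1]%R -> U (p t) /\ Bf (p t) < Bf x + 1.
  move=> tin; apply: hr => /=.
  rewrite /p opprD addrA subrr add0r normrN normrZ.
  move: tin; rewrite in_itv /= => /andP[t0 t1].
  apply: le_lt_trans hy => /=.
  rewrite ger0_norm // /v distrC -[leRHS]mul1r.
  by apply: ler_wpM2r => //; exact: normr_ge0.
have Uy : U y.
  have := (Hp 1 _).1; rewrite /p scale1r /v subrKC; apply.
  by rewrite in_itv /= lexx ler01.
split => //.
pose W := \sum_(a < 3) `|v 0 a|.
have Wge0 : 0 <= W by apply: sumr_ge0 => a _; exact: normr_ge0.
have hd (t : R) : t \in `[0, 1]%R -> is_derive t 1 (fun t => phi (x + t *: v)) ('D_v phi (p t)).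
  move=> tin; apply: seg_derive; apply: diff_derivable.
  exact: phi_diff (Hp t tin).1.
have sub01 (t : R) : t \in `]0, 1[%R -> t \in `[0, 1]%R.
  by rewrite !in_itv /= => /andP[h1 h2]; rewrite !ltW.
have hc : {within `[0, 1], continuous (fun t => phi (x + t *: v))}.
  apply: continuous_in_subspaceT => t tin.
  have tin' : t \in `[0, 1]%R by move: tin; rewrite inE.
  have [dd _] := hd t tin'.
  by apply/differentiable_continuous/derivable1_diffP.
have := @gronwall R (fun t => phi (x + t *: v)) (fun t => 'D_v phi (p t)) (W * (Bf x + 1))
  (fun t tin => hd t (sub01 t tin)) hc.
have hle (t : R) : t \in `]0, 1[%R -> 'D_v phi (p t) <= W * (Bf x + 1) * phi (x + t *: v).
  move=> tin; have [Upt Bpt] := Hp t (sub01 t tin).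
  rewrite (Dphi _ Upt); apply: le_trans (absbound _ _ _) _.
  change (W * Bf (p t) * phi (p t) <= W * (Bf x + 1) * phi (p t)).
  apply: ler_wpM2r; first exact: phi_ge0.
  by apply: ler_wpM2l => //; exact: ltW.
move=> /(_ hle).
rewrite scale0r addr0 phix => /(_ erefl) /(_ (fun t _ => phi_ge0 _)).
by rewrite scale1r /v subrKC.
Unshelve. all: by end_near.
Qed.

Lemma global : connected U -> forall x0, U x0 -> phi x0 = 0 ->
  forall y, U y -> phi y = 0.
Proof.
move=> HC x0 Ux0 p0.
pose S := [set y | U y /\ phi y = 0].
pose O := [set y | U y /\ phi y != 0].
have openS : open S.
  rewrite openE => z [Uz pz]; exact: local Uz pz.
have openO : open O.
  rewrite openE => z [Uz pz].
  have hn := cvgr_neq0 _ (phi_cont Uz) pz.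
  have hU := nearU Uz.
  rewrite /interior; near=> t; split.
    near: t; exact: hU.
  near: t; exact: hn.
have SU : S = U.
  apply: HC.
  - by exists x0.
  - exists S => //; by rewrite setIidr // => y [].
  - exists (~` O); first exact: open_closedC.
    apply/seteqP; split => y /=.
      by move=> [Uy py]; split => // -[_]; rewrite py eqxx.
    move=> [Uy nO]; split => //; apply/eqP; apply: contra_notT nO => h.
    by split.
move=> y Uy; rewrite -SU in Uy; by case: Uy.
Unshelve. all: by end_near.
Qed.

End Web.
Lemma find_c (R : realType) (p q : 'I_3 -> R) :
  exists c : 'I_3 -> R, (exists m, c m != 0) /\
    \sum_(m < 3) c m * p m = 0 /\ \sum_(m < 3) c m * q m = 0.
Proof.
pose M : 'M[R]_(3, 2) := \matrix_(m < 3, j < 2) (if j == 0 then p m else q m).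
have nf : ~~ row_free M.
  rewrite /row_free; apply/negP => /eqP h.
  by have := rank_leq_col M; rewrite h.
have : kermx M != 0 by rewrite kermx_eq0.
move=> /rowV0Pn [v /sub_kermxP vM vn0].
exists (fun m => v 0 m); split.
  move/rV0Pn: vn0 => [m hm]; by exists m.
have e j : \sum_(m < 3) v 0 m * M m j = 0.
  by have := congr1 (fun A : 'M[R]_(1, 2) => A 0 j) vM; rewrite !mxE.
split.
  by have := e 0; under eq_bigr do rewrite mxE /=.
by have := e 1; under eq_bigr do rewrite mxE /=.
Qed.

Section Comb.
Variable R : realType.
Notation V := 'rV[R]_3.
Lemma diff_const (k : R) (y : V) : differentiable (fun _ : V => k) y.
Proof. have := @differentiable_cst R V R k y. exact. Qed.

Variables (s : 'I_3 -> 'I_4 -> V -> V) (c : 'I_3 -> R).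
Definition tau k x := \sum_(m < 3) c m *: s m k x.

Lemma tau_comp k x b : tau k x 0 b = \sum_(m < 3) c m * s m k x 0 b.
Proof. by rewrite /tau summxE; apply: eq_bigr => m _; rewrite mxE. Qed.

Lemma tau_diff k b y : (forall m, differentiable (fun z => s m k z 0 b) y) ->
  differentiable (fun z => tau k z 0 b) y.
Proof.
move=> h; rewrite (_ : (fun z => tau k z 0 b) = fun z => \sum_(m < 3) c m * s m k z 0 b).
  apply: diff_sum' => m; apply: diffM'; [exact: diff_const | exact: h].
by apply/funext => z; rewrite tau_comp.
Qed.

Lemma tau_partial k b a y : (forall m, differentiable (fun z => s m k z 0 b) y) ->
  partial_coord a (fun z => tau k z 0 b) y =
  \sum_(m < 3) c m * partial_coord a (fun z => s m k z 0 b) y.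
Proof.
move=> h; rewrite (_ : (fun z => tau k z 0 b) = fun z => \sum_(m < 3) c m * s m k z 0 b).
  rewrite /partial_coord derive_sum'; last first.
    by move=> m; apply: diffM'; [exact: diff_const | exact: h].
  apply: eq_bigr => m _; rewrite deriveM'; [|exact: diff_const|exact: h].
  by rewrite (_ : (fun _ => c m) = cst (c m)) // derive_cst mulr0 addr0.
by apply/funext => z; rewrite tau_comp.
Qed.

Lemma tau_cp k x u : cov_pairing (tau k x) u = \sum_(m < 3) c m * cov_pairing (s m k x) u.
Proof.
rewrite /tau cp_sum; apply: eq_bigr => m _; exact: cp_scale.
Qed.
End Comb.

Lemma sq3 (R : realType) (a b c : R) : a * a + b * b + c * c = 0 -> [/\ a = 0, b = 0 & c = 0].
Proof.
move=> h.
have ha : a * a = 0 by nra.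
have hb : b * b = 0 by nra.
have hc : c * c = 0 by nra.
by split; [move/eqP: ha | move/eqP: hb | move/eqP: hc]; rewrite mulf_eq0 orbb => /eqP.
Qed.

Lemma theorem3_aux (R : realType) (U : set 'rV[R]_3)
    (w : 'I_3 -> 'rV[R]_3 -> 'rV[R]_3) (X : 'rV[R]_3 -> 'rV[R]_3) :
  open U -> connected U -> is_3surf1curve_web U w X -> web_nondegenerate U w X ->
  web_rank_le U w X 2%N.
Proof.
move=> HU HC [Hwf HXf] Hnd s Hs.
have Hws i : smooth_field U (w i) by case: (Hwf i).
have HXs : smooth_field U X by case: HXf.
have sdiff m k b y : U y -> differentiable (fun z => s m k z 0 b) y.
  by move=> Uy; case: (Hs m) => sm _ _ _ _; exact: ((sm k b 1%N).1 y Uy).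
have [[x0 Ux0]|nU] := pselect (exists x, U x); last first.
  exists (fun _ => 1); split; first by exists ord0; rewrite oner_neq0.
  by move=> k x Ux; exfalso; apply: nU; exists x.
have [c [cnz [c0 c1]]] :=
  find_c (fun m => Gf w X (s m) o0 x0) (fun m => Gf w X (s m) o1 x0).
exists c; split => //.
pose t := tau s c.
have Hdiff : forall (i b : 'I_3) y, U y -> differentiable (fun z => sg t i z 0 b) y.
  by move=> i b y Uy; apply: tau_diff => m; exact: sdiff.
have Hcl : forall i : 'I_3, closed_form U (sg t i).
  move=> i y Uy a b; rewrite /sg !tau_partial; try (by move=> m; exact: sdiff).
  apply: eq_bigr => m _; congr (_ * _); case: (Hs m) => _ cm _ _ _; exact: cm.
have Hann : forall i y v, U y -> cov_pairing (w i y) v = 0 -> cov_pairing (sg t i y) v = 0.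
  move=> i y v Uy h; rewrite /sg tau_cp big1 // => m _.
  by case: (Hs m) => _ _ am _ _; rewrite (am i y v Uy h) mulr0.
have sumX m y : U y -> \sum_(i < 3) cov_pairing (s m (widen_ord (leqnSn 3) i) y) (X y) = 0.
  move=> Uy; case: (Hs m) => _ _ _ xm zm.
  have := congr1 (fun a => cov_pairing a (X y)) (zm y Uy).
  by rewrite big_ord_recr /= cp_addl cp_sum cp_zero (xm y Uy) addr0.
have Hsum : forall y, U y -> \sum_(i < 3) cov_pairing (sg t i y) (X y) = 0.
  move=> y Uy; under eq_bigr do rewrite /sg tau_cp.
  rewrite exchange_big big1 // => m _; by rewrite -mulr_sumr sumX // mulr0.
have Gt i y : Gf w X t i y = \sum_(m < 3) c m * Gf w X (s m) i y.
  rewrite /Gf /sg tau_cp mulr_suml; apply: eq_bigr => m _; by rewrite mulrA.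
have parU y i u : U y -> cov_pairing (sg t i y) u = Gf w X t i y * cov_pairing (w i y) u.
  move=> Uy; exact: (par Hnd Hann i u Uy).
have G0 : Gf w X t o0 x0 = 0 by rewrite Gt.
have G1 : Gf w X t o1 x0 = 0 by rewrite Gt.
have G2 : Gf w X t o2 x0 = 0.
  have := Hsum x0 Ux0; rewrite sum3 !parU // G0 G1 !mul0r !add0r => /eqP.
  by rewrite mulf_eq0 (negPf (Af_neq0 Hnd o2 Ux0)) orbF => /eqP.
have phi0 : phi w X t x0 = 0 by rewrite /phi sum3 G0 G1 G2 !mul0r !addr0.
have Gl := global HU Hws HXs Hnd Hdiff Hcl Hann Hsum HC Ux0 phi0.
have sg0 y i : U y -> sg t i y = 0.
  move=> Uy; have := Gl y Uy; rewrite /phi sum3 => /sq3 [g0 g1 g2].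
  have gi : Gf w X t i y = 0.
    by case: i => [[|[|[|m]]] hm] //; [rewrite (_ : Ordinal hm = o0) ?g0 //
      | rewrite (_ : Ordinal hm = o1) ?g1 // | rewrite (_ : Ordinal hm = o2) ?g2 //];
      apply: val_inj.
  apply/rowP => b; rewrite mxE -cp_delta parU // gi mul0r.
  by [].
have tsum y : U y -> \sum_(k < 4) t k y = 0.
  move=> Uy; rewrite /t /tau exchange_big big1 // => m _.
  rewrite -scaler_sumr; case: (Hs m) => _ _ _ _ zm; by rewrite (zm y Uy) scaler0.
move=> k x Ux; change (t k x = 0).
case: (ltnP k 3) => hk.
  rewrite (_ : k = widen_ord (leqnSn 3) (Ordinal hk)); last exact: val_inj.
  exact: (sg0 x (Ordinal hk) Ux).
have := tsum x Ux; rewrite big_ord_recr /= big1; last first.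
  by move=> i _; exact: (sg0 x i Ux).
rewrite add0r (_ : k = ord_max) //; apply: val_inj => /=.
by apply/eqP; rewrite eqn_leq hk -ltnS ltn_ord.
Qed.

Unset Implicit Arguments.
Local Close Scope ring_scope.
Local Close Scope classical_set_scope.

Theorem theorem3 (R : realType) (U : set 'rV[R]_3)
    (w : 'I_3 -> 'rV[R]_3 -> 'rV[R]_3) (X : 'rV[R]_3 -> 'rV[R]_3) :
  open U -> connected U -> is_3surf1curve_web U w X -> web_nondegenerate U w X ->
  web_rank_le U w X 2.
Proof. exact: theorem3_aux. Qed.
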